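(* Let $q\le p$, $\tau^2>0$, $c>1$, let $H\in\mathbb{R}^{q\times p}$ have full rank $q$, let $\Sigma\in\mathbb{R}^{q\times q}$ be symmetric positive definite, and let $\lambda_1^{\Psi},\dots,\lambda_q^{\Psi}$ be the eigenvalues of $\Psi=\Sigma^{-1/2}HH^T\Sigma^{-1/2}$. If $$\sum_{i=1}^{q}\frac{1}{\left(1+(\tau^2\lambda_i^{\Psi})^{-1}\right)^2}>\frac{q}{c},$$ then $$(\sqrt{c}-1)\,\tau^2>\frac{1}{\max_{1\le i\le q}\lambda_i^{\Psi}}.$$
   Context: $\Sigma^{-1/2}$ is the symmetric positive definite inverse square root of $\Sigma$; $\Psi$ is symmetric positive definite, so all $\lambda_i^{\Psi}>0$. *)

(* Defs.v *)
From mathcomp Require Import all_boot all_order all_algebra.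
Set Implicit Arguments. Unset Strict Implicit. Unset Printing Implicit Defensive.
Import Order.TTheory GRing.Theory Num.Theory.
Local Open Scope ring_scope.

Definition symmetric_mx (R : ringType) (n : nat) (A : 'M[R]_n) : Prop := A^T = A.

Definition posdef_mx (R : numDomainType) (n : nat) (A : 'M[R]_n) : Prop :=
  symmetric_mx A /\ forall v : 'cV[R]_n, v != 0 -> 0 < (v^T *m A *m v) 0 0.

Definition eigenvalues_of (R : comRingType) (n : nat) (A : 'M[R]_n) (lam : 'I_n -> R) : Prop :=
  char_poly A = \prod_(i < n) ('X - (lam i)%:P).

(* Main.v *)
Require Import Defs.
From mathcomp Require Import all_boot all_order all_algebra.
From mathcomp Require Import ring lra.
Import Order.TTheory GRing.Theory Num.Theory.
Local Open Scope ring_scope.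

Lemma sq_ge0 (R : rcfType) (p : nat) (y : 'rV[R]_p) : 0 <= (y *m y^T) 0 0.
Proof.
rewrite mxE; apply: sumr_ge0 => j _; rewrite mxE; rewrite -expr2; exact: sqr_ge0.
Qed.

Lemma sq_gt0 (R : rcfType) (p : nat) (y : 'rV[R]_p) : y != 0 -> 0 < (y *m y^T) 0 0.
Proof.
move=> yn0; rewrite lt0r sq_ge0 andbT; apply: contra yn0 => /eqP H0.
apply/eqP/matrixP => i j; rewrite (ord1 i) mxE.
move: H0; rewrite mxE => H0.
have hnn : forall k : 'I_p, predT k -> 0 <= y 0 k * y^T k 0.
  by move=> k _; rewrite mxE -expr2; exact: sqr_ge0.
have := @psumr_eq0P _ _ predT (fun j => y 0 j * y^T j 0) hnn H0 j isT.
rewrite mxE => /eqP; rewrite mulf_eq0 orbb => /eqP ->.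
by rewrite ?mxE.
Qed.

Theorem proposition3p4 (R : rcfType) (q p : nat) (tau2 c : R)
    (H : 'M[R]_(q, p)) (Sigma Sinvhalf : 'M[R]_q) (lam : 'I_q -> R) :
  (q <= p)%N ->
  0 < tau2 ->
  1 < c ->
  \rank H = q ->
  posdef_mx Sigma ->
  posdef_mx Sinvhalf -> Sinvhalf *m Sinvhalf = invmx Sigma ->
  eigenvalues_of (Sinvhalf *m H *m H^T *m Sinvhalf) lam ->
  \sum_(i < q) 1 / (1 + (tau2 * lam i)^-1) ^+ 2 > q%:R / c ->
  (Num.sqrt c - 1) * tau2 > 1 / \big[Num.max/0]_(i < q) lam i.
Proof.
move=> _ tau0 c1 rkH _ [Ssym Spd] _ eig hsum.
set S := Sinvhalf in Ssym Spd eig *.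
have Hfree : row_free H by rewrite -row_leq_rank rkH.
have Apd : forall w : 'cV[R]_q, w != 0 ->
    0 < (w^T *m (S *m H *m H^T *m S) *m w) 0 0.
  move=> w wn0.
  have -> : w^T *m (S *m H *m H^T *m S) *m w = (w^T *m S *m H) *m (w^T *m S *m H)^T.
    by rewrite !trmx_mul trmxK Ssym !mulmxA.
  apply: sq_gt0; apply/negP => /eqP Z.
  have Z' : w^T *m S = 0 by apply: (row_free_inj Hfree); rewrite Z mul0mx.
  by have := Spd w wn0; rewrite Z' mul0mx mxE ltxx.
have lampos : forall i, 0 < lam i.
  move=> i.
  have : eigenvalue (S *m H *m H^T *m S) (lam i).
    rewrite eigenvalue_root_char eig; apply/rootP.
    rewrite horner_prod; apply/eqP; rewrite prodf_seq_eq0; apply/hasP.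
    by exists i; rewrite ?mem_index_enum //= !hornerE subrr.
  case/eigenvalueP => v Hv vn0.
  have := Apd v^T; rewrite trmx_eq0 => /(_ vn0); rewrite trmxK Hv -scalemxAl mxE.
  by rewrite pmulr_lgt0 // sq_gt0.
set M := \big[Num.max/0]_(i < q) lam i.
have Mge : forall i, lam i <= M.
  by move=> i; rewrite /M (bigD1 i) //= le_max lexx.
set f := fun x : R => 1 / (1 + (tau2 * x)^-1) ^+ 2.
have fle : forall i, f (lam i) <= f M.
  move=> i; have li := lampos i; have lM := Mge i.
  have M0 : 0 < M by apply: lt_le_trans lM.
  have ha : (tau2 * M)^-1 <= (tau2 * lam i)^-1.
    by rewrite lef_pV2 ?posrE ?mulr_gt0 // ler_pM2l.
  have a0 : 0 < (tau2 * M)^-1 by rewrite invr_gt0 mulr_gt0.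
  have b0 : 0 < (tau2 * lam i)^-1 by rewrite invr_gt0 mulr_gt0.
  have p1 : 0 < (1 + (tau2 * M)^-1) ^+ 2 by rewrite exprn_gt0 // addr_gt0.
  have p2 : 0 < (1 + (tau2 * lam i)^-1) ^+ 2 by rewrite exprn_gt0 // addr_gt0.
  rewrite /f !div1r lef_pV2 ?posrE //.
  nra.
have hs : \sum_(i < q) f (lam i) <= f M *+ q.
  by rewrite -[in X in _ <= X](card_ord q) -sumr_const; apply: ler_sum => i _.
have qpos : (0 < q)%N.
  rewrite lt0n; apply/negP => /eqP q0.
  have e1 : (q%:R : R) = 0 by rewrite q0.
  have e2 : f M *+ q = 0 by rewrite q0.
  have := lt_le_trans hsum hs; by rewrite e1 e2 mul0r ltxx.
have M0 : 0 < M by apply: lt_le_trans (lampos (Ordinal qpos)) (Mge _).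
have hq : (0:R) < q%:R by rewrite ltr0n.
have h1 : c^-1 < f M.
  rewrite -(ltr_pM2l hq) !mulr_natl; move: hsum; rewrite mulr_natl => hsum'; exact: lt_le_trans hsum' hs.
set a := (tau2 * M)^-1.
have a0 : 0 < a by rewrite invr_gt0 mulr_gt0.
have c0 : 0 < c by lra.
have p1 : 0 < (1 + a) ^+ 2 by rewrite exprn_gt0 // addr_gt0.
move: h1; rewrite /f div1r ltf_pV2 ?posrE // => h1.
have h2 : 1 + a < Num.sqrt c.
  rewrite -(ger0_norm (x := 1 + a)); last by lra.
  by rewrite -sqrtr_sqr ltr_sqrt.
have -> : 1 / M = a * tau2.
  rewrite /a invfM mulrAC mulVf ?div1r ?mul1r //; lra.
by rewrite ltr_pM2r //; lra.
Qed.
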